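(* Let $\psi$ be an Orlicz function satisfying the $\Delta^2$-Condition and let $a>1$. Then there exist $C>0$ and $x_1>0$ such that $\psi^{-1}(x^a)\le C\,\psi^{-1}(x)$ for all $x\ge x_1$. Consequently, for any $\alpha>-1$, $N\ge1$ and any holomorphic $\phi:\mathbb{B}_N\to\mathbb{B}_N$, $$\lim_{|z|\to1}\frac{\psi^{-1}\big(1/(1-|\phi(z)|)^{N+\alpha+1}\big)}{\psi^{-1}\big(1/(1-|z|)^{N+\alpha+1}\big)}=0\iff\lim_{|z|\to1}\frac{\psi^{-1}\big(1/(1-|\phi(z)|)\big)}{\psi^{-1}\big(1/(1-|z|)\big)}=0.$$
   Context: An Orlicz function is a strictly convex $\psi:[0,\infty)\to[0,\infty)$ with $\psi(0)=0$, continuous at $0$, and $\psi(x)/x\to\infty$; $\psi^{-1}$ denotes its inverse. $\psi$ satisfies the $\Delta^2$-Condition if there exist $C>0$, $x_0>0$ with $\psi(x)^2\le\psi(Cx)$ for all $x\ge x_0$. $\mathbb{B}_N$ is the open unit ball of $\mathbb{C}^N$. *)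

(* Defs.v *)
From Stdlib Require Import Reals Lra.
Open Scope R_scope.

(** Orlicz functions, represented as psi : R -> R, only its values on [0,oo) matter. *)
Definition Orlicz (psi : R -> R) : Prop :=
  (forall x, 0 <= x -> 0 <= psi x) /\
  psi 0 = 0 /\
  (forall x y t, 0 <= x -> 0 <= y -> x <> y -> 0 < t < 1 ->
      psi (t * x + (1 - t) * y) < t * psi x + (1 - t) * psi y) /\
  (forall eps, 0 < eps -> exists d, 0 < d /\
      forall x, 0 <= x < d -> Rabs (psi x) < eps) /\
  (forall M, exists X, 0 < X /\ forall x, X <= x -> M <= psi x / x).

Definition is_Orlicz_inverse (psi psiinv : R -> R) : Prop :=
  forall y, 0 <= y -> 0 <= psiinv y /\ psi (psiinv y) = y.

Definition Delta2 (psi : R -> R) : Prop :=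
  exists C x0, 0 < C /\ 0 < x0 /\
    forall x, x0 <= x -> (psi x) ^ 2 <= psi (C * x).

(** C^N: vectors z : nat -> R*R (real part, imaginary part), whose coordinates
    of index >= N are required to vanish. *)
Definition cvec := nat -> (R * R).

Fixpoint sumN (N : nat) (f : nat -> R) : R :=
  match N with O => 0 | S n => sumN n f + f n end.

Definition cmul (a b : R * R) : R * R :=
  (fst a * fst b - snd a * snd b, fst a * snd b + snd a * fst b).
Definition cadd (a b : R * R) : R * R := (fst a + fst b, snd a + snd b).
Definition csub (a b : R * R) : R * R := (fst a - fst b, snd a - snd b).
Definition cabs2 (a : R * R) : R := fst a ^ 2 + snd a ^ 2.

Definition supported (N : nat) (z : cvec) : Prop :=
  forall k, (N <= k)%nat -> z k = (0, 0).

Definition vnorm (N : nat) (z : cvec) : R := sqrt (sumN N (fun k => cabs2 (z k))).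

Definition inBall (N : nat) (z : cvec) : Prop := supported N z /\ vnorm N z < 1.

Definition vadd (z w : cvec) : cvec := fun k => cadd (z k) (w k).
Definition vsub (z w : cvec) : cvec := fun k => csub (z k) (w k).

Definition mxapp (N : nat) (L : nat -> nat -> R * R) (h : cvec) : cvec :=
  fun j => if Nat.ltb j N then
     (sumN N (fun k => fst (cmul (L j k) (h k))),
      sumN N (fun k => snd (cmul (L j k) (h k))))
   else (0, 0).

Definition holomorphic_on_ball (N : nat) (phi : cvec -> cvec) : Prop :=
  forall z, inBall N z -> exists L : nat -> nat -> R * R,
    forall eps, 0 < eps -> exists delta, 0 < delta /\
      forall h, supported N h -> 0 < vnorm N h < delta -> inBall N (vadd z h) ->
        vnorm N (vsub (vsub (phi (vadd z h)) (phi z)) (mxapp N L h))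
          <= eps * vnorm N h.

Definition holo_self_map (N : nat) (phi : cvec -> cvec) : Prop :=
  holomorphic_on_ball N phi /\ (forall z, inBall N z -> inBall N (phi z)).

Definition lim_boundary_zero (N : nat) (f : cvec -> R) : Prop :=
  forall eps, 0 < eps -> exists delta, 0 < delta /\
    forall z, inBall N z -> 1 - vnorm N z < delta -> Rabs (f z) < eps.

(* Main.v *)
Require Import Defs.
From Stdlib Require Import Reals Lra Lia ZArith.
Open Scope R_scope.

Section S.
Variables psi psiinv : R -> R.
Hypothesis Hpsi : Orlicz psi.
Hypothesis Hinv : is_Orlicz_inverse psi psiinv.

Lemma psi_strict : forall x y, 0 <= x -> x < y -> psi x < psi y.
Proof.
  intros x y Hx Hxy.
  destruct Hpsi as [Hnn [H0 [Hc _]]].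
  assert (Hy : 0 < y) by lra.
  assert (Hpy := Hnn y (Rlt_le _ _ Hy)).
  destruct (Req_dec x 0) as [E|E].
  - subst x. rewrite H0.
    assert (h := Hc y 0 (/2) (Rlt_le _ _ Hy) (Rle_refl 0) ltac:(lra) ltac:(lra)).
    rewrite H0 in h. replace (/2 * y + (1 - /2) * 0) with (y/2) in h by field.
    assert (0 <= psi (y/2)) by (apply Hnn; lra). lra.
  - assert (h := Hc y 0 (x/y) (Rlt_le _ _ Hy) (Rle_refl 0) ltac:(lra)).
    assert (ht : 0 < x / y < 1).
    { split. apply Rdiv_lt_0_compat; lra.
      apply (Rmult_lt_reg_r y); [lra|]. field_simplify; lra. }
    specialize (h ht). rewrite H0 in h.
    replace (x / y * y + (1 - x / y) * 0) with x in h by (field; lra).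
    assert (x / y * psi y <= psi y).
    { rewrite <- (Rmult_1_l (psi y)) at 2. apply Rmult_le_compat_r; lra. }
    lra.
Qed.

Lemma psi_le_rev : forall a b, 0 <= a -> 0 <= b -> psi a <= psi b -> a <= b.
Proof.
  intros a b Ha Hb H. destruct (Rle_lt_dec a b); auto.
  assert (psi b < psi a) by (apply psi_strict; lra). lra.
Qed.

Lemma F_mono : forall s t, 0 <= s -> s <= t -> psiinv s <= psiinv t.
Proof.
  intros s t Hs Hst. destruct (Hinv s Hs) as [A1 A2].
  destruct (Hinv t ltac:(lra)) as [B1 B2].
  destruct (Rle_lt_dec (psiinv s) (psiinv t)); auto.
  assert (psi (psiinv t) < psi (psiinv s)) by (apply psi_strict; lra). lra.
Qed.

Lemma F_pos : forall x, 0 < x -> 0 < psiinv x.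
Proof.
  intros x Hx. destruct (Hinv x ltac:(lra)) as [A1 A2].
  destruct Hpsi as [_ [H0 _]].
  destruct (Req_dec (psiinv x) 0) as [E|E]; [rewrite E in A2; lra | lra].
Qed.

Lemma F_le_pow : forall x p, 1 <= x -> 1 < p -> psiinv x <= psiinv (Rpower x p).
Proof.
  intros x p Hx Hp. apply F_mono; [lra|].
  rewrite <- (Rpower_1 x) at 1 by lra. apply Rle_Rpower; lra.
Qed.

Lemma key : Delta2 psi -> forall p, 1 < p -> exists C, 0 < C /\
   forall x, 1 <= x -> psiinv (Rpower x p) <= C * psiinv x.
Proof.
  intros [C0 [x0 [HC0 [Hx0 HD]]]] p Hp.
  destruct Hpsi as [Hnn [H0 _]].
  set (X := Rmax 1 (psi x0)).
  assert (HX1 : 1 <= X) by apply Rmax_l.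
  assert (HX2 : psi x0 <= X) by apply Rmax_r.
  assert (claim : forall x, X <= x -> forall n, x0 <= C0 ^ n * psiinv x /\
            x ^ S n <= psi (C0 ^ n * psiinv x)).
  { intros x Hx. destruct (Hinv x ltac:(lra)) as [A1 A2].
    induction n as [|n [IH1 IH2]].
    - simpl. rewrite Rmult_1_l, Rmult_1_r, A2. split; [|lra].
      destruct (Rle_lt_dec x0 (psiinv x)); auto.
      assert (psi (psiinv x) < psi x0) by (apply psi_strict; lra). lra.
    - set (w := C0 ^ n * psiinv x) in *.
      replace (C0 ^ S n * psiinv x) with (C0 * w) by (unfold w; simpl; ring).
      assert (Hd := HD w IH1).
      assert (HA : 1 <= x ^ S n) by (apply pow_R1_Rle; lra).
      assert (HxA : x <= x ^ S n).
      { simpl. rewrite <- (Rmult_1_r x) at 1. apply Rmult_le_compat_l; try lra.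
        apply pow_R1_Rle; lra. }
      split.
      + assert (w <= C0 * w).
        { apply psi_le_rev; try lra. apply Rmult_le_pos; lra. nra. }
        lra.
      + change (x ^ S (S n)) with (x * x ^ S n). nra. }
  destruct (archimed p) as [Hu _].
  set (n := Z.to_nat (up p)).
  assert (Hn : p <= INR (S n)).
  { rewrite S_INR. unfold n. rewrite INR_IZR_INZ, Z2Nat.id. lra.
    apply le_IZR. lra. }
  assert (big : forall x, X <= x -> psiinv (Rpower x p) <= C0 ^ n * psiinv x).
  { intros x Hx. destruct (claim x Hx n) as [B1 B2].
    apply Rle_trans with (psiinv (x ^ S n)).
    - apply F_mono. left; apply exp_pos.
      rewrite <- Rpower_pow by lra. apply Rle_Rpower; lra.
    - destruct (Hinv (x ^ S n) ltac:(assert (1 <= x ^ S n) by (apply pow_R1_Rle; lra); lra))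
        as [D1 D2].
      apply psi_le_rev; try lra. }
  assert (HF1 := F_pos 1 ltac:(lra)).
  exists (Rmax (C0 ^ n) (psiinv (Rpower X p) / psiinv 1)). split.
  { apply Rlt_le_trans with (C0 ^ n). apply pow_lt; lra. apply Rmax_l. }
  intros x Hx. destruct (Rle_lt_dec X x) as [h|h].
  - apply Rle_trans with (C0 ^ n * psiinv x); auto.
    apply Rmult_le_compat_r. left; apply F_pos; lra. apply Rmax_l.
  - apply Rle_trans with (psiinv (Rpower X p)).
    + apply F_mono. left; apply exp_pos. apply Rle_Rpower_l; lra.
    + apply Rle_trans with (psiinv (Rpower X p) / psiinv 1 * psiinv x).
      * assert (psiinv 1 <= psiinv x) by (apply F_mono; lra).
        assert (0 <= psiinv (Rpower X p)) by (apply (Hinv _); left; apply exp_pos).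
        unfold Rdiv. rewrite Rmult_assoc.
        rewrite <- (Rmult_1_r (psiinv (Rpower X p))) at 1.
        apply Rmult_le_compat_l; auto.
        apply (Rmult_le_reg_l (psiinv 1)); auto.
        field_simplify; lra.
      * apply Rmult_le_compat_r. left; apply F_pos; lra. apply Rmax_r.
Qed.
End S.

Theorem mainTheorem8 (psi psiinv : R -> R)
  (Hpsi : Orlicz psi) (Hinv : is_Orlicz_inverse psi psiinv) (HD : Delta2 psi) :
  (forall a, 1 < a -> exists C x1, 0 < C /\ 0 < x1 /\
      forall x, x1 <= x -> psiinv (Rpower x a) <= C * psiinv x) /\
  (forall (alpha : R) (N : nat) (phi : cvec -> cvec),
      -1 < alpha -> (1 <= N)%nat -> holo_self_map N phi ->
      (lim_boundary_zero N (fun z =>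
          psiinv (Rpower (1 / (1 - vnorm N (phi z))) (INR N + alpha + 1))
          / psiinv (Rpower (1 / (1 - vnorm N z)) (INR N + alpha + 1)))
       <->
       lim_boundary_zero N (fun z =>
          psiinv (1 / (1 - vnorm N (phi z))) / psiinv (1 / (1 - vnorm N z))))).
Proof.
  split.
  - intros a Ha. destruct (key psi psiinv Hpsi Hinv HD a Ha) as [C [HC H]].
    exists C, 1. repeat split; auto; lra.
  - intros alpha N phi Hal HN [_ Hmap].
    set (p := INR N + alpha + 1).
    assert (Hp : 1 < p) by (unfold p; apply le_INR in HN; simpl in HN; lra).
    destruct (key psi psiinv Hpsi Hinv HD p Hp) as [C [HC HK]].
    assert (Hge1 : forall z, inBall N z -> 1 <= 1 / (1 - vnorm N z)).
    { intros z [_ Hz]. assert (0 <= vnorm N z) by apply sqrt_pos.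
      apply (Rmult_le_reg_l (1 - vnorm N z)); [lra|]. field_simplify; lra. }
    assert (Hrat : forall z, inBall N z ->
      let u := 1 / (1 - vnorm N (phi z)) in let v := 1 / (1 - vnorm N z) in
      0 <= psiinv (Rpower u p) / psiinv (Rpower v p) /\
      0 <= psiinv u / psiinv v /\
      psiinv (Rpower u p) / psiinv (Rpower v p) <= C * (psiinv u / psiinv v) /\
      psiinv u / psiinv v <= C * (psiinv (Rpower u p) / psiinv (Rpower v p))).
    { intros z Hz u v.
      assert (Hu : 1 <= u) by (apply Hge1; auto).
      assert (Hv : 1 <= v) by (apply Hge1; auto).
      assert (Fu := F_pos psi psiinv Hpsi Hinv u ltac:(lra)).
      assert (Fv := F_pos psi psiinv Hpsi Hinv v ltac:(lra)).
      assert (Fu' := F_le_pow psi psiinv Hpsi Hinv u p Hu Hp).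
      assert (Fv' := F_le_pow psi psiinv Hpsi Hinv v p Hv Hp).
      assert (Ku := HK u Hu). assert (Kv := HK v Hv).
      set (a := psiinv u) in *. set (b := psiinv v) in *.
      set (a' := psiinv (Rpower u p)) in *. set (b' := psiinv (Rpower v p)) in *.
      repeat split.
      - unfold Rdiv; apply Rmult_le_pos; [lra| left; apply Rinv_0_lt_compat; lra].
      - unfold Rdiv; apply Rmult_le_pos; [lra| left; apply Rinv_0_lt_compat; lra].
      - apply (Rmult_le_reg_r b'); [lra|]. unfold Rdiv.
        rewrite Rmult_assoc, Rinv_l by lra.
        apply (Rmult_le_reg_r b); [lra|].
        replace (C * (a * / b) * b' * b) with (C * a * b') by (field; lra). nra.
      - apply (Rmult_le_reg_r b); [lra|]. unfold Rdiv.
        rewrite Rmult_assoc, Rinv_l by lra.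
        apply (Rmult_le_reg_r b'); [lra|].
        replace (C * (a' * / b') * b * b') with (C * a' * b) by (field; lra). nra. }
    split; intros H eps Heps;
      destruct (H (eps / C) ltac:(apply Rdiv_lt_0_compat; lra)) as [d [Hd Hz]];
      exists d; split; auto; intros z Hzb Hzd; specialize (Hz z Hzb Hzd);
      destruct (Hrat z Hzb) as [R1 [R2 [R3 R4]]];
      rewrite Rabs_right in * by lra;
      apply (Rmult_lt_compat_l C) in Hz; auto;
      replace (C * (eps / C)) with eps in Hz by (field; lra); lra.
Qed.
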